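(* Let $D\subset\mathbb N^n$ be finite, not contained in any coordinate hyperplane, $p$ a prime, $m\ge1$ an integer and $\varphi:\mathbb Z/m\mathbb Z\to\Sigma_p(D)$ a map. Let $M_{D,p}(\varphi)$ be the set of minimal elements $U\in E_{D,p}(m)$ with $\varphi_U=\varphi$. Then (i) $M_{D,p}(\varphi)$ is empty if and only if at least one of the sets $V(\varphi(-i-1),\varphi(-i))$, $0\le i\le m-1$, is empty; (ii) otherwise the map $$B_\varphi:M_{D,p}(\varphi)\to\prod_{i=0}^{m-1}V(\varphi(-i-1),\varphi(-i))$$ sending $(u_{\mathbf d})_{\mathbf d\in D}$ to its base-$p$ digits $((u_{\mathbf d,i})_{\mathbf d\in D})_{0\le i\le m-1}$ (where $u_{\mathbf d}=\sum_{i=0}^{m-1}u_{\mathbf d,i}p^i$, $0\le u_{\mathbf d,i}\le p-1$) is a well-defined one-to-one correspondence.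
   Context: $s_p$ = base-$p$ digit sum. $E_{D,p}(r)$ = set of $U=(u_{\mathbf d})_{\mathbf d\in D}\in\{0,\dots,p^r-1\}^D$ with $\sum u_{\mathbf d}\mathbf d\equiv0\pmod{p^r-1}$ coordinatewise and all coordinates of $\sum u_{\mathbf d}\mathbf d$ positive ($U$ has length $r$); $s_p(U)=\sum s_p(u_{\mathbf d})$; $\delta_p(D)=\frac1{p-1}\min_{r\ge1}\min_{U\in E_{D,p}(r)}s_p(U)/r$ (the minimum exists); $U\in E_{D,p}(r)$ is minimal if $s_p(U)=(p-1)r\delta_p(D)$. Shift $\delta_r$ on $\{0,\dots,p^r-1\}$: $k\mapsto pk\bmod(p^r-1)$ for $k\le p^r-2$, $p^r-1\mapsto p^r-1$, applied coordinatewise. Support of $U\in E_{D,p}(r)$: $\varphi_U:\mathbb Z/r\mathbb Z\to\mathbb N_{>0}^n$, $\varphi_U(k)=\frac1{p^r-1}\sum_{\mathbf d}\mathbf d(\delta_r^kU)_{\mathbf d}$. $U$ is irreducible if $\varphi_U$ is injective; $MI_{D,p}$ = set of minimal irreducible elements of all lengths; $\Sigma_p(D)=\bigcup_{U\in MI_{D,p}}\mathrm{Im}\varphi_U$. $\psi(U)=(u_{\mathbf d}\bmod p)_{\mathbf d}\in\{0,\dots,p-1\}^D$; for $\mathbf e,\mathbf e'\in\Sigma_p(D)$, $V(\mathbf e,\mathbf e')=\{\psi(U):U\in MI_{D,p},\varphi_U(-1)=\mathbf e,\varphi_U(0)=\mathbf e'\}$. *)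

(* Defs.v *)
From mathcomp Require Import all_boot.
Set Implicit Arguments. Unset Strict Implicit. Unset Printing Implicit Defensive.

(* Points of N^n are finite functions 'I_n -> nat.  A finite set D of such
   points is given as a sequence; the index type of families (u_d)_{d in D}
   is the finite type [seq_sub D] of elements of D. *)
Notation vecN n := {ffun 'I_n -> nat}.

Section Defs.
Variables (n : nat) (D : seq (vecN n)) (p : nat).

Notation idx := (seq_sub D).
Notation fam := {ffun idx -> nat}.

(* base-p digit sum s_p(u) = sum_i ((u / p^i) mod p); digits of index > u vanish *)
Definition sp (u : nat) : nat := \sum_(i < u.+1) ((u %/ p ^ i) %% p).

Definition spU (U : fam) : nat := \sum_(d : idx) sp (U d).

Definition wsum (U : fam) : vecN n := [ffun j => \sum_(d : idx) U d * (ssval d) j].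

Definition inE (r : nat) (U : fam) : Prop :=
  0 < r /\ (forall d, U d < p ^ r) /\
  (forall j, (p ^ r - 1) %| wsum U j) /\ (forall j, 0 < wsum U j).

(* U in E_{D,p}(r) is minimal: s_p(U)/r attains min_{r',U'} s_p(U')/r',
   i.e. s_p(U) = (p-1) r delta_p(D). *)
Definition minimalE (r : nat) (U : fam) : Prop :=
  inE r U /\ forall r' (U' : fam), inE r' U' -> spU U * r' <= spU U' * r.

Definition shift (r k : nat) : nat :=
  if k == p ^ r - 1 then k else (p * k) %% (p ^ r - 1).
Definition shiftU (r : nat) (U : fam) : fam := [ffun d => shift r (U d)].

(* support phi_U(k) = (1/(p^r-1)) sum_d d (delta_r^k U)_d, for k in Z/rZ
   (represented by nat k, taken modulo r; delta_r^r = id on E) *)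
Definition phiU (r : nat) (U : fam) (k : nat) : vecN n :=
  [ffun j => wsum (iter k (shiftU r) U) j %/ (p ^ r - 1)].

Definition irreducible (r : nat) (U : fam) : Prop :=
  forall k1 k2, k1 < r -> k2 < r -> phiU r U k1 = phiU r U k2 -> k1 = k2.

Definition inMI (r : nat) (U : fam) : Prop := minimalE r U /\ irreducible r U.

Definition inSigma (e : vecN n) : Prop :=
  exists r (U : fam), inMI r U /\ exists2 k, k < r & phiU r U k = e.

Definition psi (U : fam) : fam := [ffun d => U d %% p].

(* V(e,e') ; phi_U(-1) = phiU r U (r-1) *)
Definition inV (e e' : vecN n) (v : fam) : Prop :=
  exists r (U : fam), [/\ inMI r U, phiU r U r.-1 = e, phiU r U 0 = e' & psi U = v].

Definition inM (m : nat) (phi : 'I_m -> vecN n) (U : fam) : Prop :=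
  minimalE m U /\ forall k : 'I_m, phiU m U k = phi k.

Definition Bdig (m : nat) (U : fam) (i : 'I_m) : fam :=
  [ffun d => (U d %/ p ^ i) %% p].

End Defs.

Arguments sp p u.
Arguments spU {n} D p U.
Arguments wsum {n} D U.
Arguments inE {n} D p r U.
Arguments minimalE {n} D p r U.
Arguments shift p r k.
Arguments shiftU {n} D p r U.
Arguments phiU {n} D p r U k.
Arguments irreducible {n} D p r U.
Arguments inMI {n} D p r U.
Arguments inSigma {n} D p e.
Arguments psi {n} D p U.
Arguments inV {n} D p e e' v.
Arguments inM {n} D p {m} phi U.
Arguments Bdig {n} D p {m} U i.

(* Main.v *)
Require Import Defs.
From mathcomp Require Import all_boot.
From Stdlib Require Import Classical_Prop.
From mathcomp Require Import zify.
Require Import Defs.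
Set Implicit Arguments. Unset Strict Implicit. Unset Printing Implicit Defensive.

Lemma arith1 (q X t a : nat) : 0 < X -> a < X -> t <= q -> t * X + a = q.+1 * X - 1 -> t = q /\ a = X - 1.
Proof.
move=> X0 ha tq E.
have : t = q.
  apply/eqP; rewrite eqn_leq tq /= leqNgt; apply/negP => lt.
  have : t.+1 * X <= q * X by rewrite leq_mul2r lt orbT.
  lia.
move=> et; subst t; split => //; lia.
Qed.
Lemma arith2 (q X t a : nat) : 0 < X -> a < X -> t <= q -> t * X + a < q.+1 * X - 1 -> q.+1 * a + t < q.+1 * X - 1.
Proof.
move=> X0 ha tq E.
have h1 : a.+1 * q.+1 <= X * q.+1 by rewrite leq_mul2r ha orbT.
case: (ltnP t q) => tq'.
  lia.
have et : t = q by lia. subst t.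
case: (ltnP a.+1 X) => ha'.
  have : a.+2 * q.+1 <= X * q.+1 by rewrite leq_mul2r ha' orbT.
  lia.
have ea : a = X - 1 by lia. subst a.
have : q * X + X = q.+1 * X by lia.
lia.
Qed.

Section Num.
Variable p : nat.
Hypothesis p_gt1 : 1 < p.

Lemma shift_eq r x : 0 < r -> x < p ^ r ->
  shift p r x = p * (x %% p ^ r.-1) + x %/ p ^ r.-1.
Proof.
case: r => // r _; rewrite /= expnS => hx.
set X := p ^ r. have X0 : 0 < X by rewrite expn_gt0 ltnW.
have ha : x %% X < X by apply ltn_pmod.
have ht : x %/ X < p by rewrite ltn_divLR // mulnC.
have hx' := divn_eq x X.
move: ha ht hx'; set a := x %% X; set t := x %/ X => ha ht hx'.
have tle : t <= p.-1 by lia.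
have ep : p = (p.-1).+1 by lia.
rewrite /shift; case: eqP => [E|NE].
  rewrite expnS -/X ep hx' in E.
  have [-> ->] := arith1 X0 ha tle E.
  rewrite ep /=. rewrite -ep. nia.
rewrite expnS -/X in NE *.
have -> : p * x = t * (p * X - 1) + (p * a + t).
  rewrite hx' ep /=. nia.
rewrite modnMDl modn_small //.
rewrite ep; apply: arith2 => //.
rewrite -ep -hx'. lia.
Qed.
Definition Rk (p r k u : nat) := u %% p ^ (r - k) * p ^ k + u %/ p ^ (r - k).

Lemma Rk_step r k u : k < r -> u < p ^ r ->
  [/\ Rk p r k u < p ^ r, shift p r (Rk p r k u) = Rk p r k.+1 u
    & Rk p r k u %/ p ^ r.-1 = u %/ p ^ (r.-1 - k) %% p].
Proof.
move=> kr ur.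
have p0 : 0 < p by lia.
have r0 : 0 < r by lia.
have [e He] : exists e, r - k = e.+1 by exists (r - k).-1; lia.
have e1 : r - k.+1 = e by lia.
have e2 : r.-1 = e + k by lia.
have e3 : r.-1 - k = e by lia.
have er : p ^ r = p ^ e.+1 * p ^ k by rewrite -expnD; congr (_ ^ _); lia.
rewrite /Rk He e1 e3.
have pe0 : 0 < p ^ e by rewrite expn_gt0 p0.
have pk0 : 0 < p ^ k by rewrite expn_gt0 p0.
set a := u %% p ^ e.+1; set b := u %/ p ^ e.+1.
have hu : u = b * p ^ e.+1 + a by apply divn_eq.
have ha : a < p ^ e.+1 by apply ltn_pmod; rewrite expn_gt0 p0.
have hb : b < p ^ k by rewrite ltn_divLR ?expn_gt0 ?p0 // mulnC -er.
have ha0 : a %% p ^ e = u %% p ^ e by rewrite /a; apply/modn_dvdm; rewrite dvdn_exp2l.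
set a0 := u %% p ^ e in ha0 *.
set a1 := a %/ p ^ e.
have hA : a = a1 * p ^ e + a0 by rewrite -ha0; apply divn_eq.
have ha1 : a1 < p by rewrite ltn_divLR // -expnS.
have ha0' : a0 < p ^ e by apply ltn_pmod.
clearbody a b a0 a1.
have hlow : a0 * p ^ k + b < p ^ (e + k).
  have : a0.+1 * p ^ k <= p ^ e * p ^ k by rewrite leq_mul2r ha0' orbT.
  rewrite expnD. lia.
have hx : a * p ^ k + b = a1 * p ^ (e + k) + (a0 * p ^ k + b).
  by rewrite hA expnD; lia.
have hue : u = (p * b + a1) * p ^ e + a0.
  by rewrite hu hA expnSr; lia.
have hue' : u %/ p ^ e = p * b + a1 by rewrite {1}hue divnMDl // divn_small // addn0.
split.
- rewrite er. have : a.+1 * p ^ k <= p ^ e.+1 * p ^ k by rewrite leq_mul2r ha orbT. lia.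
- rewrite shift_eq //; last first.
    rewrite er. have : a.+1 * p ^ k <= p ^ e.+1 * p ^ k by rewrite leq_mul2r ha orbT. lia.
  rewrite e2 hx modnMDl modn_small // divnMDl ?expn_gt0 ?p0 // divn_small // addn0.
  rewrite -/a0 hue' expnS; lia.
- rewrite e2 hx divnMDl ?expn_gt0 ?p0 // divn_small // addn0 hue'.
  by rewrite (mulnC p b) modnMDl modn_small.
Qed.

Lemma iter_shift r k u : 0 < r -> u < p ^ r -> k <= r ->
  iter k (shift p r) u = Rk p r k u.
Proof.
move=> r0 ur; elim: k => [|k IH] kr.
  by rewrite /Rk subn0 expn0 muln1 modn_small // divn_small // addn0.
have kr' : k < r by [].
rewrite iterS IH; last exact: ltnW.
by case: (Rk_step kr' ur).
Qed.

Lemma iter_shift_r r u : 0 < r -> u < p ^ r -> iter r (shift p r) u = u.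
Proof.
move=> r0 ur; rewrite iter_shift // /Rk subnn expn0 modn1 divn1 //.
Qed.
Definition dg j u := u %/ p ^ j %% p.
Definition num L (c : nat -> nat) := \sum_(i < L) c i * p ^ i.

Lemma p0 : 0 < p. Proof. lia. Qed.

Lemma num_S L c : num L.+1 c = c 0 + p * num L (fun i => c i.+1).
Proof.
rewrite /num big_ord_recl /= expn0 muln1 big_distrr /=; congr (_ + _).
apply: eq_bigr => i _; have -> : bump 0 i = i.+1 by []. by rewrite expnS; lia.
Qed.

Lemma eq_num L c c' : (forall i, i < L -> c i = c' i) -> num L c = num L c'.
Proof. by move=> h; apply: eq_bigr => i _; rewrite h. Qed.

Lemma dg0 u : dg 0 u = u %% p.
Proof. by rewrite /dg expn0 divn1. Qed.

Lemma dgS j u : dg j.+1 u = dg j (u %/ p).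
Proof. by rewrite /dg expnS divnMA. Qed.

Lemma dg_small j u : u < p ^ j -> dg j u = 0.
Proof. by move=> h; rewrite /dg divn_small // mod0n. Qed.

Lemma num_lt L c : (forall i, i < L -> c i < p) -> num L c < p ^ L.
Proof.
elim: L c => [|L IH] c hc; first by rewrite /num big_ord0.
rewrite num_S expnS.
have h0 : c 0 < p by apply hc.
have h1 : num L (fun i => c i.+1) < p ^ L by apply IH => i hi; apply hc.
have : p * (num L (fun i => c i.+1)).+1 <= p * p ^ L by rewrite leq_mul2l h1 orbT.
lia.
Qed.

Lemma dg_num L c : (forall i, i < L -> c i < p) -> forall j, j < L -> dg j (num L c) = c j.
Proof.
elim: L c => [|L IH] c hc j // hj.
have h0 : c 0 < p by apply hc.
rewrite num_S; case: j hj => [|j] hj.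
  by rewrite dg0 addnC (mulnC p) modnMDl modn_small.
rewrite dgS addnC (mulnC p) divnMDl ?p0 // divn_small // addn0.
by apply: (IH (fun i => c i.+1)) => // i hi; apply hc.
Qed.

Lemma num_dg L u : u < p ^ L -> num L (fun i => dg i u) = u.
Proof.
elim: L u => [|L IH] u hu.
  by rewrite /num big_ord0; move: hu; rewrite expn0; case: u.
rewrite num_S.
rewrite (@eq_num L (fun i => dg i.+1 u) (fun i => dg i (u %/ p))); last by move=> i _; rewrite dgS.
rewrite IH; first by rewrite dg0 {3}(divn_eq u p); lia.
by rewrite ltn_divLR ?p0 // -expnSr.
Qed.

Lemma sum_ext_zero (g : nat -> nat) L N : L <= N -> (forall i, L <= i -> g i = 0) ->
  \sum_(i < N) g i = \sum_(i < L) g i.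
Proof.
move=> LN hz; elim: N LN => [|N IH] LN.
  by move: LN; rewrite leqn0 => /eqP ->.
case: (ltnP L N.+1) => h.
  by rewrite big_ord_recr /= IH // hz // addn0.
have -> : L = N.+1 by lia.
by [].
Qed.

Lemma sp_dg L u : u < p ^ L -> sp p u = \sum_(i < L) dg i u.
Proof.
move=> hu; rewrite /sp.
rewrite -/(dg _ _).
have h1 : forall i, L <= i -> dg i u = 0.
  move=> i hi; apply dg_small; apply: (leq_trans hu); rewrite leq_exp2l //.
have h2 : forall i, u.+1 <= i -> dg i u = 0.
  move=> i hi; apply dg_small; apply: (leq_trans _ (ltnW (ltn_expl _ p_gt1))); lia.
rewrite -(@sum_ext_zero (fun i => dg i u) L (L + u.+1)) ?leq_addr //.
rewrite -(@sum_ext_zero (fun i => dg i u) u.+1 (L + u.+1)) ?leq_addl //.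
Qed.
End Num.

Lemma sum_recl (H : nat -> nat) n : \sum_(i < n.+1) H i = H 0 + \sum_(i < n) H i.+1.
Proof. by rewrite big_ord_recl. Qed.

Lemma sum_recr (H : nat -> nat) n : \sum_(i < n.+1) H i = \sum_(i < n) H i + H n.
Proof. by rewrite big_ord_recr. Qed.

Lemma sum_split (H : nat -> nat) x y :
  \sum_(i < x + y) H i = \sum_(i < x) H i + \sum_(i < y) H (x + i).
Proof.
elim: y => [|y IH]; first by rewrite addn0 big_ord0 addn0.
by rewrite addnS !sum_recr IH (sum_recr (fun i => H (x + i))) addnA.
Qed.

Lemma sum_rot (h : nat -> nat) L s : 0 < L ->
  \sum_(i < L) h ((s + i) %% L) = \sum_(i < L) h i.
Proof.
move=> L0; elim: s => [|s IH].
  by apply: eq_bigr => i _; rewrite add0n modn_small.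
rewrite -IH.
have e1 := sum_recl (fun i => h ((s + i) %% L)) L.
have e2 := sum_recr (fun i => h ((s + i) %% L)) L.
have : \sum_(i < L) h ((s + i.+1) %% L) = \sum_(i < L) h ((s + i) %% L).
  have := etrans (esym e1) e2.
  rewrite /= addn0 modnDr addnC => /eqP; rewrite eqn_add2r => /eqP.
  by [].
by apply: etrans; apply: eq_bigr => i _; rewrite addSnnS.
Qed.

Section Main.
Variables (n : nat) (D : seq {ffun 'I_n -> nat}) (p : nat).
Hypothesis pp : prime p.
Let p1 : 1 < p := prime_gt1 pp.
Let p0 : 0 < p := ltnW p1.

Local Notation fam := {ffun seq_sub D -> nat}.
Local Notation vec := {ffun 'I_n -> nat}.

Definition tot L (v : nat -> fam) := \sum_(i < L) \sum_(d : seq_sub D) v i d.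
Definition pathC L (v : nat -> fam) (g : nat -> vec) :=
  forall i, i < L -> (forall d, v i d < p) /\
    (forall j, \sum_(d : seq_sub D) v i d * ssval d j + g i j = p * g i.+1 j).
Definition cchain L v g := [/\ pathC L v g, g L = g 0 & forall j, 0 < g 0 j].
Definition build L (v : nat -> fam) : fam := [ffun d => num p L (fun i => v i d)].
Definition digs (U : fam) i : fam := [ffun d => dg p i (U d)].
Definition minC L v := forall r' (U' : fam), inE D p r' U' -> tot L v * r' <= spU D p U' * L.

Lemma build_lt L v g : pathC L v g -> forall d, build L v d < p ^ L.
Proof.
move=> hp d; rewrite ffunE; apply: num_lt => // i hi; by case: (hp i hi).
Qed.

Lemma digs_build L v g : pathC L v g -> forall i, i < L -> digs (build L v) i = v i.
Proof.
move=> hp i hi; apply/ffunP => d; rewrite !ffunE (dg_num p1) // => k hk.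
by case: (hp k hk).
Qed.

Lemma spU_build L v g : pathC L v g -> spU D p (build L v) = tot L v.
Proof.
move=> hp; rewrite /spU /tot exchange_big /=; apply: eq_bigr => d _.
rewrite (sp_dg p1 (build_lt hp d)); apply: eq_bigr => i _.
by move/ffunP: (digs_build hp (ltn_ord i)) => /(_ d); rewrite ffunE.
Qed.

Lemma wsum_build L v g : pathC L v g -> forall j,
  wsum D (build L v) j + g 0 j = p ^ L * g L j.
Proof.
move=> hp j; rewrite /wsum ffunE.
have : forall k, k <= L -> \sum_(d : seq_sub D) num p k (fun i => v i d) * ssval d j + g 0 j
   = p ^ k * g k j.
  elim=> [|k IH] hk.
    by rewrite expn0 mul1n big1 // => d _; rewrite /num big_ord0.
  have [_ hr] := hp k hk.
  have e : forall d, num p k.+1 (fun i => v i d) * ssval d j =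
     num p k (fun i => v i d) * ssval d j + p ^ k * (v k d * ssval d j).
    by move=> d; rewrite /num (sum_recr (fun i => v i d * p ^ i)); lia.
  rewrite (eq_bigr _ (fun d _ => e d)) big_split /= -big_distrr /=.
  rewrite addnAC (IH (ltnW hk)) -mulnDr addnC hr expnS; lia.
move=> h; rewrite -h //; congr (_ + _); apply: eq_bigr => d _; by rewrite ffunE.
Qed.

Lemma iterU k r (U : fam) d : (iter k (shiftU D p r) U) d = iter k (shift p r) (U d).
Proof. by elim: k => //= k IH; rewrite ffunE IH. Qed.

Lemma shift_eq2 r x : 0 < r -> x < p ^ r ->
  shift p r x + (p ^ r - 1) * (x %/ p ^ r.-1) = p * x.
Proof.
move=> r0 hx; rewrite (shift_eq p1) //.
case: r r0 hx => // r _ hx; rewrite /= expnS.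
have q0 : 0 < p ^ r by rewrite expn_gt0 p0.
have := divn_eq x (p ^ r).
move: (x %/ p ^ r) (x %% p ^ r) => t a ->.
rewrite mulnBl mul1n.
have : t <= p * p ^ r * t by rewrite leq_pmull // muln_gt0 p0.
lia.
Qed.

Lemma shiftU_step r (U : fam) k j : 0 < r -> (forall d, U d < p ^ r) -> k < r ->
  wsum D (iter k.+1 (shiftU D p r) U) j +
    (p ^ r - 1) * \sum_(d : seq_sub D) dg p (r.-1 - k) (U d) * ssval d j
  = p * wsum D (iter k (shiftU D p r) U) j.
Proof.
move=> r0 hU kr; rewrite /wsum !ffunE big_distrr big_distrr -big_split /=.
apply: eq_bigr => d _.
rewrite ffunE !iterU (iter_shift p1 r0 (hU d) (ltnW kr)).
have [hlt _ htop] := Rk_step p1 kr (hU d).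
rewrite /dg -htop mulnA -mulnDl (shift_eq2 r0 hlt); lia.
Qed.

Lemma iter_lt r (U : fam) k d : 0 < r -> (forall d, U d < p ^ r) -> k <= r ->
  iter k (shiftU D p r) U d < p ^ r.
Proof.
move=> r0 hU kr; rewrite iterU (iter_shift p1) //.
case: (ltnP k r) => h; first by case: (Rk_step p1 h (hU d)).
have -> : k = r by lia.
by rewrite /Rk subnn expn0 modn1 divn1 mul0n add0n.
Qed.

Lemma iter_r r (U : fam) : 0 < r -> (forall d, U d < p ^ r) ->
  iter r (shiftU D p r) U = U.
Proof.
move=> r0 hU; apply/ffunP => d; by rewrite iterU (iter_shift_r p1).
Qed.

Lemma phi_dvd r (U : fam) : 0 < r -> (forall d, U d < p ^ r) ->
  (forall j, (p ^ r - 1) %| wsum D U j) ->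
  forall k, k <= r -> forall j, (p ^ r - 1) %| wsum D (iter k (shiftU D p r) U) j.
Proof.
move=> r0 hU hd; elim=> [|k IH] hk j //.
have := shiftU_step j r0 hU hk.
move=> e.
have h1 : (p ^ r - 1) %| wsum D (iter k.+1 (shiftU D p r) U) j +
    (p ^ r - 1) * \sum_(d : seq_sub D) dg p (r.-1 - k) (U d) * ssval d j.
  by rewrite e dvdn_mull // (IH (ltnW hk)).
by rewrite dvdn_addl // in h1; apply dvdn_mulr.
Qed.

Lemma Pm1 r : 0 < r -> 0 < p ^ r - 1.
Proof. move=> r0; have := ltn_expl r p1; lia. Qed.

Lemma phi_rec r (U : fam) : 0 < r -> (forall d, U d < p ^ r) ->
  (forall j, (p ^ r - 1) %| wsum D U j) ->
  forall k j, k < r ->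
  phiU D p r U k.+1 j + \sum_(d : seq_sub D) dg p (r.-1 - k) (U d) * ssval d j
    = p * phiU D p r U k j.
Proof.
move=> r0 hU hd k j kr.
have M0 := Pm1 r0.
have e := shiftU_step j r0 hU kr.
have [q1 e1] := dvdnP (phi_dvd r0 hU hd kr j).
have [q2 e2] := dvdnP (phi_dvd r0 hU hd (ltnW kr) j).
have E1 : forall k', phiU D p r U k' j = wsum D (iter k' (shiftU D p r) U) j %/ (p ^ r - 1).
  by move=> k'; rewrite /phiU ffunE.
rewrite !E1 e1 e2 !mulnK //.
rewrite e1 e2 in e.
apply/eqP; rewrite -(eqn_pmul2l M0); apply/eqP.
rewrite mulnDr; lia.
Qed.

Lemma phi_per r (U : fam) : 0 < r -> (forall d, U d < p ^ r) ->
  phiU D p r U r = phiU D p r U 0.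
Proof. by move=> r0 hU; rewrite /phiU iter_r. Qed.

Lemma phi0_pos r (U : fam) : inE D p r U -> forall j, 0 < phiU D p r U 0 j.
Proof.
move=> [r0 [hU [hd hpos]]] j.
have [q e] := dvdnP (hd j).
rewrite /phiU ffunE /= e mulnK ?Pm1 //.
have := hpos j; rewrite e; case: q {e} => //.
Qed.

Lemma E_chain r (U : fam) : inE D p r U ->
  cchain r (digs U) (fun i => phiU D p r U (r - i)).
Proof.
move=> hE; have [r0 [hU [hd hpos]]] := hE.
split.
- move=> i hi; split; first by move=> d; rewrite ffunE ltn_pmod.
  move=> j.
  have k_lt : r.-1 - i < r by lia.
  have := phi_rec r0 hU hd j k_lt.
  have -> : (r.-1 - i).+1 = r - i by lia.
  have -> : r.-1 - (r.-1 - i) = i by lia.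
  have -> : r.-1 - i = r - i.+1 by lia.
  move=> <-; rewrite addnC; congr (_ + _); apply: eq_bigr => d _; by rewrite ffunE.
- by rewrite subnn subn0 phi_per.
- by move=> j; rewrite subn0 phi_per //; apply phi0_pos.
Qed.

Lemma build_digs r (U : fam) : inE D p r U -> build r (digs U) = U.
Proof.
move=> [r0 [hU _]]; apply/ffunP => d; rewrite ffunE.
rewrite -[RHS](num_dg p1 (hU d)); apply: eq_num => i _; by rewrite ffunE.
Qed.

Lemma spU_E r (U : fam) : inE D p r U -> spU D p U = tot r (digs U).
Proof.
move=> hE; have [hp _ _] := E_chain hE.
by rewrite -{1}(build_digs hE) (spU_build hp).
Qed.

Lemma build_E L v g : cchain L v g -> 0 < L ->
  inE D p L (build L v) /\ phiU D p L (build L v) 0 = g 0.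
Proof.
move=> [hp hcl hpos] L0.
have M0 := Pm1 L0.
have hw : forall j, wsum D (build L v) j = (p ^ L - 1) * g 0 j.
  move=> j; have := wsum_build hp j; rewrite hcl mulnBl mul1n; lia.
split; first split => //; first split; first exact: build_lt hp.
  by split => j; rewrite hw ?dvdn_mulr // muln_gt0 M0 hpos.
by apply/ffunP => j; rewrite ffunE /= hw mulKn.
Qed.

Lemma build_phi L v g : cchain L v g -> 0 < L ->
  forall k, k <= L -> phiU D p L (build L v) k = g (L - k).
Proof.
move=> hc L0; have [hE h0] := build_E hc L0; have [hp hcl hpos] := hc.
have [_ [hU [hd _]]] := hE.
elim=> [|k IH] hk; first by rewrite h0 subn0 hcl.
apply/ffunP => j.
have := phi_rec L0 hU hd j hk.
rewrite (IH (ltnW hk)).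
have iL : L.-1 - k < L by lia.
have [_ hr] := hp _ iL.
have := hr j.
have -> : (L.-1 - k).+1 = L - k by lia.
have -> : L.-1 - k = L - k.+1 by lia.
move=> <- e.
have iL' : L - k.+1 < L by lia.
have hs : \sum_(d : seq_sub D) dg p (L - k.+1) (build L v d) * ssval d j =
    \sum_(d : seq_sub D) v (L - k.+1) d * ssval d j.
  apply: eq_bigr => d _.
  by move/ffunP: (digs_build hp iL') => /(_ d); rewrite ffunE => ->.
rewrite hs [X in _ = X]addnC in e.
by apply/eqP; rewrite -(eqn_add2r (\sum_(d : seq_sub D) v (L - k.+1) d * ssval d j)) e.
Qed.

Lemma psi_build L v g : pathC L v g -> 0 < L -> psi D p (build L v) = v 0.
Proof.
move=> hp L0; rewrite -(digs_build hp L0); apply/ffunP => d; by rewrite !ffunE dg0.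
Qed.

Lemma inMI_build L v g : cchain L v g -> 0 < L -> minC L v ->
  (forall x y, 0 < x <= L -> 0 < y <= L -> g x = g y -> x = y) ->
  inMI D p L (build L v).
Proof.
move=> hc L0 hm hinj; have [hE _] := build_E hc L0; have [hp _ _] := hc.
split; first split => // r' U' hE'; first by rewrite (spU_build hp); apply hm.
move=> k1 k2 h1 h2; rewrite !(build_phi hc L0); [|exact: ltnW|exact: ltnW] => e.
have := hinj _ _ _ _ e; lia.
Qed.

Lemma gwrap L v g : cchain L v g -> forall x, x < L -> g x.+1 = g (x.+1 %% L).
Proof.
move=> [_ hcl _] x hx; case: (ltnP x.+1 L) => h; first by rewrite modn_small.
have -> : x.+1 = L by lia.
by rewrite modnn hcl.
Qed.

Lemma gpos L v g : cchain L v g -> forall i, i <= L -> forall j, 0 < g i j.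
Proof.
move=> [hp _ hpos]; elim=> [|i IH] hi j; first exact: hpos.
have [_ hr] := hp i hi; have := hr j; have := IH (ltnW hi) j.
case: (g i.+1 j) => //; lia.
Qed.

Lemma seg_chain L v g s l : cchain L v g -> 0 < L -> 0 < l ->
  g (s %% L) = g ((s + l) %% L) ->
  cchain l (fun i => v ((s + i) %% L)) (fun i => g ((s + i) %% L)).
Proof.
move=> hc L0 l0 hcl; have [hp _ _] := hc.
split.
- move=> i hi; have hx : (s + i) %% L < L by apply ltn_pmod.
  have [hv hr] := hp _ hx; split => // j.
  rewrite hr (gwrap hc hx); congr (p * g _ j).
  by rewrite -addn1 modnDml addn1 addnS.
- by rewrite addn0.
- move=> j; apply: (gpos hc); apply ltnW; apply ltn_pmod => //.
Qed.

Lemma seg_res L v g s t j r (U' : fam) : cchain L v g -> 0 < L -> j < L ->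
  (s + t) %% L = j ->
  [/\ inMI D p r U', phiU D p r U' r.-1 = g ((s + t.+1) %% L),
      phiU D p r U' 0 = g ((s + t) %% L) & psi D p U' = v ((s + t) %% L)] ->
  [/\ inMI D p r U', phiU D p r U' r.-1 = g j.+1,
      phiU D p r U' 0 = g j & psi D p U' = v j].
Proof.
move=> hc L0 hj e [h1 h2 h3 h4]; split => //; rewrite ?h2 ?h3 ?h4 ?e //.
rewrite (gwrap hc hj); congr (g _).
by rewrite -e -[in RHS]addn1 modnDml addnS addn1.
Qed.

Lemma tot_rot L v s : 0 < L -> tot L (fun i => v ((s + i) %% L)) = tot L v.
Proof. move=> L0; exact: (sum_rot (fun i => \sum_(d : seq_sub D) v i d) s L0). Qed.

Lemma modL_inj L x y : 0 < x <= L -> 0 < y <= L -> x %% L = y %% L -> x = y.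
Proof.
move=> hx hy; case: (ltnP x L) => h1; case: (ltnP y L) => h2.
- by rewrite !modn_small.
- have ey : y = L by lia.
  by rewrite ey modnn modn_small //; lia.
- have ex : x = L by lia.
  by rewrite ex modnn modn_small //; lia.
- lia.
Qed.

Lemma arith_part (T T1 L l r' S : nat) : 0 < L -> T1 * L = T * l -> T * r' <= S * L ->
  T1 * r' <= S * l.
Proof.
move=> L0 e h; rewrite -(leq_pmul2l L0).
have -> : L * (T1 * r') = l * (T * r').
  by rewrite mulnA (mulnC L) e; lia.
have -> : L * (S * l) = l * (S * L) by lia.
by rewrite leq_mul2l h orbT.
Qed.

Lemma L1 L v g : 0 < L -> cchain L v g -> minC L v -> forall j, j < L ->
  exists r (U' : fam), [/\ inMI D p r U', phiU D p r U' r.-1 = g j.+1,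
     phiU D p r U' 0 = g j & psi D p U' = v j].
Proof.
elim/ltn_ind: L v g => L IH v g L0 hc hm j hj.
case: (boolP [forall x : 'I_L, forall y : 'I_L, (g x == g y) ==> (x == y)]) => hinj.
- set v' := fun i => v ((j + i) %% L); set g' := fun i => g ((j + i) %% L).
  have hc' : cchain L v' g' by apply: (seg_chain (s:=j) hc L0 L0); rewrite modnDr.
  have hm' : minC L v' by move=> r' U' hE; rewrite /v' tot_rot //; apply hm.
  exists L, (build L v').
  apply: (@seg_res L v g j 0 j) => //; first by rewrite addn0 modn_small.
  have [hp _ _] := hc'.
  split.
  + apply: (inMI_build hc') => // x y hx hy; rewrite /g' => e.
    have hx' : (j + x) %% L < L by apply ltn_pmod.
    have hy' : (j + y) %% L < L by apply ltn_pmod.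
    move/forallP: hinj => /(_ (Ordinal hx')) /forallP /(_ (Ordinal hy')) /implyP.
    rewrite /= e eqxx => /(_ isT) /eqP [] e'.
    apply: (@modL_inj L) => //; apply/eqP; rewrite -(eqn_modDl j); exact/eqP.
  + rewrite (build_phi hc' L0) ?leq_pred // /g'.
    by have -> : L - L.-1 = 1 by lia.
  + by rewrite (build_phi hc' L0) // subn0 /g' modnDr addn0.
  + by rewrite (psi_build hp L0) /v' addn0.
- move/forallPn: hinj => [x] /forallPn [y]; rewrite negb_imply => /andP [/eqP gxy nxy].
  have [a [b [ab bL gab]]] : exists a b, [/\ a < b, b < L & g a = g b].
    case: (ltngtP x y) => h.
    + by exists x, y; split.
    + by exists y, x; split.
    + by move: nxy; rewrite (val_inj h) eqxx.
  set c := b - a; set l2 := L - c.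
  have c0 : 0 < c by rewrite /c; lia.
  have cL : c < L by rewrite /c; lia.
  have l20 : 0 < l2 by rewrite /l2; lia.
  have eL : L = c + l2 by rewrite /l2; lia.
  set v1 := fun i => v ((a + i) %% L); set g1 := fun i => g ((a + i) %% L).
  set v2 := fun i => v ((b + i) %% L); set g2 := fun i => g ((b + i) %% L).
  have hc1 : cchain c v1 g1.
    apply: (seg_chain (s:=a) hc L0 c0).
    have -> : a + c = b by rewrite /c; lia.
    have aL : a < L by lia.
    by rewrite !modn_small.
  have hc2 : cchain l2 v2 g2.
    apply: (seg_chain (s:=b) hc L0 l20).
    have -> : b + l2 = a + L by rewrite /l2 /c; lia.
    have aL : a < L by lia.
    by rewrite modnDr !modn_small.
  have htot : tot c v1 + tot l2 v2 = tot L v.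
    rewrite -(tot_rot v a L0) /tot.
    have := sum_split (fun i => \sum_(d : seq_sub D) v ((a + i) %% L) d) c l2.
    rewrite -eL => ->; congr (_ + _).
    apply: eq_bigr => i _; have -> : a + (c + i) = b + i by rewrite /c; lia.
    by [].
  have [hp1 _ _] := hc1; have [hp2 _ _] := hc2.
  have [hE1 _] := build_E hc1 c0; have [hE2 _] := build_E hc2 l20.
  have m1 := hm _ _ hE1; rewrite (spU_build hp1) in m1.
  have m2 := hm _ _ hE2; rewrite (spU_build hp2) in m2.
  have e1 : tot c v1 * L = tot L v * c.
    move: m1 m2; rewrite -htot eL !mulnDr !mulnDl; lia.
  have e2 : tot l2 v2 * L = tot L v * l2.
    move: m1 m2; rewrite -htot eL !mulnDr !mulnDl; lia.
  have hm1 : minC c v1.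
    by move=> r' U' hE; apply: (arith_part L0 e1); apply hm.
  have hm2 : minC l2 v2.
    by move=> r' U' hE; apply: (arith_part L0 e2); apply hm.
  have l2L : l2 < L by rewrite /l2; lia.
  case: (ltnP j a) => hja; last case: (ltnP j b) => hjb.
  + have ht : L - b + j < l2 by rewrite /l2 /c; lia.
    have [r [U' hres]] := IH l2 l2L v2 g2 l20 hc2 hm2 _ ht.
    exists r, U'; apply: (@seg_res L v g b (L - b + j) j) => //.
    by rewrite addnA subnKC ?(ltnW bL) // modnDl modn_small.
  + have ht : j - a < c by rewrite /c; lia.
    have [r [U' hres]] := IH c cL v1 g1 c0 hc1 hm1 _ ht.
    exists r, U'; apply: (@seg_res L v g a (j - a) j) => //.
    by rewrite subnKC // modn_small.
  + have ht : j - b < l2 by rewrite /l2 /c; lia.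
    have [r [U' hres]] := IH l2 l2L v2 g2 l20 hc2 hm2 _ ht.
    exists r, U'; apply: (@seg_res L v g b (j - b) j) => //.
    by rewrite subnKC // modn_small.
Qed.

Lemma phi_mod r (U : fam) k : inE D p r U -> k <= r -> phiU D p r U k = phiU D p r U (k %% r).
Proof.
move=> [r0 [hU _]] hk; case: (ltnP k r) => h; first by rewrite modn_small.
have -> : k = r by lia.
by rewrite modnn phi_per.
Qed.

Lemma part1 m (phi : 'I_m -> vec) (U : fam) : inM D p phi U ->
  forall i : 'I_m, inV D p (phi (rev_ord i)) (phi (ordS (rev_ord i))) (Bdig D p U i).
Proof.
move=> [hmin hphi] i; have [hE hmn] := hmin.
have m0 : 0 < m by apply: (leq_ltn_trans _ (ltn_ord i)).
have hc := E_chain hE.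
have hmC : minC m (digs U) by move=> r' U' hE'; rewrite -(spU_E hE); apply hmn.
have [r [U' [h1 h2 h3 h4]]] := L1 m0 hc hmC (ltn_ord i).
exists r, U'; split => //.
- by rewrite h2 -hphi.
- rewrite h3 -hphi /= (phi_mod (k := m - i) hE (leq_subr _ _)); congr (phiU D p m U (_ %% m)); have := ltn_ord i; lia.
Qed.

Lemma part2 m (phi : 'I_m -> vec) (U U' : fam) : inM D p phi U -> inM D p phi U' ->
  (forall i : 'I_m, Bdig D p U i = Bdig D p U' i) -> U = U'.
Proof.
move=> [[hE _] _] [[hE' _] _] hB; apply/ffunP => d.
rewrite -(build_digs hE) -(build_digs hE') !ffunE; apply: eq_num => i hi.
by move/ffunP: (hB (Ordinal hi)) => /(_ d); rewrite !ffunE.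
Qed.

Definition catv a (v1 v2 : nat -> fam) i := if i < a then v1 i else v2 (i - a).
Definition catg a (g1 g2 : nat -> vec) i := if i < a then g1 i else g2 (i - a).

Lemma path_cat a b v1 g1 v2 g2 : pathC a v1 g1 -> pathC b v2 g2 -> g1 a = g2 0 ->
  pathC (a + b) (catv a v1 v2) (catg a g1 g2).
Proof.
move=> h1 h2 e i hi; rewrite /catv /catg; case: (ltnP i a) => ha.
  have [hv hr] := h1 i ha; split => // j; rewrite hr.
  case: (ltnP i.+1 a) => h'; first by [].
  have ei : i.+1 = a by lia.
  by rewrite ei subnn e.
have hb : i - a < b by lia.
have [hv hr] := h2 _ hb; split => // j.
have -> : (i.+1 < a) = false by apply/negbTE; rewrite -leqNgt; lia.
by rewrite hr subSn.
Qed.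

Lemma tot_cat a b v1 v2 : tot (a + b) (catv a v1 v2) = tot a v1 + tot b v2.
Proof.
rewrite /tot (sum_split (fun i => \sum_(d : seq_sub D) catv a v1 v2 i d)); congr (_ + _); apply: eq_bigr => i _; rewrite /catv.
  by rewrite ltn_ord.
by rewrite ltnNge leq_addr /= addKn.
Qed.

Lemma catg0 a g1 g2 : g1 a = g2 0 -> catg a g1 g2 0 = g1 0.
Proof. by rewrite /catg; case: a => [|a] //= ->. Qed.

Lemma catgL a b g1 g2 : catg a g1 g2 (a + b) = g2 b.
Proof. by rewrite /catg ltnNge leq_addr /= addKn. Qed.

Lemma path_drop L v g : pathC L.+1 v g -> pathC L (fun i => v i.+1) (fun i => g i.+1).
Proof. by move=> h i hi; apply: h. Qed.

Lemma tot_drop L v : tot L.+1 v = \sum_(d : seq_sub D) v 0 d + tot L (fun i => v i.+1).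
Proof. by rewrite /tot (sum_recl (fun i => \sum_(d : seq_sub D) v i d)). Qed.

Lemma arith_fin T Wt S L m R0 S0 RS : L + m = RS -> T + Wt = S -> S * R0 = S0 * RS ->
  S0 * L <= T * R0 -> Wt * R0 <= S0 * m.
Proof.
move=> e1 e2 e3 h; rewrite -e1 -e2 mulnDl mulnDr in e3; lia.
Qed.

Lemma arith_fin2 X R0 S0 m r Y : 0 < R0 -> X * R0 <= S0 * m -> S0 * r <= Y * R0 ->
  X * r <= Y * m.
Proof.
move=> R00 h1 h2; rewrite -(leq_pmul2l R00).
have a := leq_mul h1 (leqnn r); have b := leq_mul h2 (leqnn m).
lia.
Qed.

Lemma part3 m (phi : 'I_m -> vec) (W : 'I_m -> fam) : 0 < m ->
  (forall i, inV D p (phi (rev_ord i)) (phi (ordS (rev_ord i))) (W i)) ->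
  exists2 U, inM D p phi U & forall i, Bdig D p U i = W i.
Proof.
case: m phi W => // m' phi W _ hW.
set m := m'.+1.
have hW' : forall i : 'I_m, exists r, exists U : fam,
    [/\ inMI D p r U, phiU D p r U r.-1 = phi (rev_ord i),
        phiU D p r U 0 = phi (ordS (rev_ord i)) & psi D p U = W i] := hW.
have [rr hrr] := fin_all_exists hW'.
have [UU hUU] := fin_all_exists hrr.
set g := fun i => phi (inord ((m - i) %% m)).
set v := fun i => W (inord i).
have ord1 : forall i : 'I_m, inord ((m - i) %% m) = ordS (rev_ord i).
  move=> i; apply/val_inj; rewrite /= inordK; last exact: ltn_pmod.
  congr (_ %% _); have := ltn_ord i; lia.
have ord2 : forall i : 'I_m, inord ((m - i.+1) %% m) = rev_ord i.
  move=> i; apply/val_inj; rewrite /= inordK; last exact: ltn_pmod.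
  by rewrite modn_small //; have := ltn_ord i; lia.
have hE : forall i, inE D p (rr i) (UU i).
  by move=> i; have [[[]]] := hUU i.
have r0 : forall i, 0 < rr i by move=> i; have [] := hE i.
have K0 : forall i : 'I_m, phiU D p (rr i) (UU i) 0 = g i.
  by move=> i; have [_ _ h _] := hUU i; rewrite /g ord1 h.
have K2 : forall i : 'I_m, phiU D p (rr i) (UU i) (rr i - 1) = g i.+1.
  by move=> i; have [_ h _ _] := hUU i; rewrite /g ord2 subn1 h.
have Kw : forall i : 'I_m, digs (UU i) 0 = W i.
  move=> i; have [_ _ _ <-] := hUU i; apply/ffunP => d; by rewrite !ffunE dg0.
have hc : cchain m v g.
  split.
  - move=> i hi; set i' : 'I_m := inord i.
    have ei : (i' : nat) = i by rewrite inordK.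
    have [hp _ _] := E_chain (hE i').
    have [hv hr] := hp 0 (r0 i').
    split; first by move=> d; rewrite /v -/i' -(Kw i'); apply hv.
    move=> j; have := hr j.
    rewrite subn0 (phi_per (r0 i')) ?(K0 i') ?(K2 i') ?ei ?(Kw i') //.
    by have [_ [hU _]] := hE i'.
  - by rewrite /g subnn subn0 mod0n modnn.
  - move=> j; have := phi0_pos (hE ord0) j; by rewrite K0.
have [hEU hphi0] := build_E hc (ltn0Sn m').
have [hpU _ _] := hc.
set U := build m v.
have hphiU : forall k : 'I_m, phiU D p m U k = phi k.
  move=> k; rewrite (build_phi hc (ltn0Sn m') (ltnW (ltn_ord k))) /g.
  rewrite subKn; last exact: ltnW.
  by rewrite modn_small // inord_val.
have hB : forall i, Bdig D p U i = W i.
  move=> i; have := digs_build hpU (ltn_ord i).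
  by rewrite /v inord_val => <-; apply/ffunP => d; rewrite !ffunE.
exists U => //; split => //; split => // r' U' hE'.
set R := fun i => rr (inord i); set S := fun i => spU D p (UU (inord i)).
set Wt := fun i => \sum_(d : seq_sub D) W (inord i) d.
have hmin : forall i, minimalE D p (rr i) (UU i) by move=> i; have [[]] := hUU i.
have eqS : forall i : 'I_m, spU D p (UU i) * rr ord0 = spU D p (UU ord0) * rr i.
  move=> i; apply/eqP; rewrite eqn_leq; apply/andP; split.
    by have [_ h] := hmin i; apply: h; apply hE.
  by have [_ h] := hmin ord0; apply: h; apply hE.
have big : forall k, k <= m -> exists L vv gg,
   [/\ pathC L vv gg, gg 0 = g k, gg L = g 0, L + k = \sum_(i < k) R i
     & tot L vv + \sum_(i < k) Wt i = \sum_(i < k) S i].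
  elim=> [|k IH] hk.
    exists 0, v, (fun _ => g 0); split; [by move=> i; rewrite ltn0 | by [] | by [] | by rewrite big_ord0 | by rewrite /tot !big_ord0].
  have [L [vv [gg [hp0 hg0 hgL hlen htot]]]] := IH (ltnW hk).
  set i' : 'I_m := inord k.
  have ei : (i' : nat) = k by rewrite inordK.
  have [hpi _ _] := E_chain (hE i').
  have er : rr i' = (rr i').-1.+1 by have := r0 i'; lia.
  have hseg := path_drop (eq_rect _ (fun r => pathC r _ _) hpi _ er).
  set sv := fun t => digs (UU i') t.+1 in hseg.
  set sg := fun t => phiU D p (rr i') (UU i') (rr i' - t.+1) in hseg.
  have hsa : sg (rr i').-1 = gg 0.
    by rewrite /sg -er subnn hg0 -ei -K0.
  have hpc := path_cat hseg hp0 hsa.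
  exists ((rr i').-1 + L), (catv (rr i').-1 sv vv), (catg (rr i').-1 sg gg); split => //.
  - by rewrite (catg0 hsa) /sg K2 ei.
  - by rewrite catgL.
  - rewrite sum_recr -hlen /R -/i'; lia.
  - rewrite tot_cat !sum_recr -htot /S /Wt -/i' (spU_E (hE i')) er tot_drop -er (Kw i').
    rewrite /tot /sv; lia.
have [L [vv [gg [hp0 hg0 hgL hlen htot]]]] := big m (leqnn m).
have hbound : spU D p (UU ord0) * L <= tot L vv * rr ord0.
  case: L hp0 hg0 hgL hlen htot => [|L] hp0 hg0 hgL hlen htot; first by rewrite muln0.
  have hcc : cchain L.+1 vv gg.
    have gm0 : g m = g 0 by rewrite /g subnn subn0 mod0n modnn.
    split => //; first by rewrite hgL hg0 gm0.
    move=> j; rewrite hg0 gm0; have := phi0_pos (hE ord0) j; by rewrite K0.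
  have [hEb _] := build_E hcc (ltn0Sn L).
  have [_ h] := hmin ord0; have := h _ _ hEb.
  by rewrite (spU_build hp0).
have hsum : (\sum_(i < m) S i) * rr ord0 = spU D p (UU ord0) * \sum_(i < m) R i.
  rewrite big_distrl big_distrr /=; apply: eq_bigr => i _.
  by rewrite /S /R inord_val eqS.
have hspU : spU D p U = \sum_(i < m) Wt i.
  rewrite (spU_build hpU) /tot; apply: eq_bigr => i _; by [].
have A := arith_fin hlen htot hsum hbound.
rewrite -hspU in A.
have [_ h0] := hmin ord0.
exact: (arith_fin2 (r0 ord0) A (h0 _ _ hE')).
Qed.
End Main.

Lemma t1 (n : nat) (D : seq {ffun 'I_n -> nat}) (p m : nat)
    (phi : 'I_m -> {ffun 'I_n -> nat}) : prime p ->
  (forall U, inM D p phi U -> forall i : 'I_m,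
            inV D p (phi (rev_ord i)) (phi (ordS (rev_ord i))) (Bdig D p U i)).
Proof. move=> pp U hU i. exact (part1 pp hU i). Qed.
Lemma t2 (n : nat) (D : seq {ffun 'I_n -> nat}) (p m : nat)
    (phi : 'I_m -> {ffun 'I_n -> nat}) : prime p ->
  (forall U U', inM D p phi U -> inM D p phi U' ->
            (forall i : 'I_m, Bdig D p U i = Bdig D p U' i) -> U = U').
Proof. move=> pp U U' hU hU' hB. exact (part2 pp hU hU' hB). Qed.
Lemma t3 (n : nat) (D : seq {ffun 'I_n -> nat}) (p m : nat)
    (phi : 'I_m -> {ffun 'I_n -> nat}) : prime p -> 0 < m ->
  (forall W : 'I_m -> {ffun seq_sub D -> nat},
            (forall i : 'I_m, inV D p (phi (rev_ord i)) (phi (ordS (rev_ord i))) (W i)) ->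
            exists2 U, inM D p phi U & forall i : 'I_m, Bdig D p U i = W i).
Proof. move=> pp m0 W hW. exact (part3 pp m0 hW). Qed.
Lemma t4 (n : nat) (D : seq {ffun 'I_n -> nat}) (p m : nat)
    (phi : 'I_m -> {ffun 'I_n -> nat}) : prime p -> 0 < m ->
  ((~ exists U, inM D p phi U) ->
     exists i : 'I_m, ~ exists v, inV D p (phi (rev_ord i)) (phi (ordS (rev_ord i))) v).
Proof.
move=> pp m0 hno; apply: NNPP => hall; apply: hno.
have hv : forall i : 'I_m, exists v,
    inV D p (phi (rev_ord i)) (phi (ordS (rev_ord i))) v.
  by move=> i; apply: NNPP => hn; apply: hall; exists i.
have [W hW] := fin_all_exists hv.
have [U hU _] := part3 pp m0 hW.
by exists U.
Qed.
Lemma t5 (n : nat) (D : seq {ffun 'I_n -> nat}) (p m : nat)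
    (phi : 'I_m -> {ffun 'I_n -> nat}) : prime p -> 0 < m ->
  ((exists i : 'I_m, ~ exists v, inV D p (phi (rev_ord i)) (phi (ordS (rev_ord i))) v) -> ~ exists U, inM D p phi U).
Proof.
move=> pp m0 [i hi] [U hU]; apply: hi; exists (Bdig D p U i).
exact (part1 pp hU i).
Qed.

(* For i : 'I_m, rev_ord i = -i-1 mod m and ordS (rev_ord i) = -i mod m. *)
Theorem proposition2p18 (n : nat) (D : seq {ffun 'I_n -> nat}) (p m : nat)
    (phi : 'I_m -> {ffun 'I_n -> nat}) :
  (forall j : 'I_n, exists2 d, d \in D & 0 < d j) ->
  prime p -> 0 < m ->
  (forall k : 'I_m, inSigma D p (phi k)) ->
  ((~ exists U, inM D p phi U) <->
     exists i : 'I_m, ~ exists v, inV D p (phi (rev_ord i)) (phi (ordS (rev_ord i))) v)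
  /\
  ((forall i : 'I_m, exists v, inV D p (phi (rev_ord i)) (phi (ordS (rev_ord i))) v) ->
     [/\ (forall U, inM D p phi U -> forall i : 'I_m,
            inV D p (phi (rev_ord i)) (phi (ordS (rev_ord i))) (Bdig D p U i)),
         (forall U U', inM D p phi U -> inM D p phi U' ->
            (forall i : 'I_m, Bdig D p U i = Bdig D p U' i) -> U = U')
       & (forall W : 'I_m -> {ffun seq_sub D -> nat},
            (forall i : 'I_m, inV D p (phi (rev_ord i)) (phi (ordS (rev_ord i))) (W i)) ->
            exists2 U, inM D p phi U & forall i : 'I_m, Bdig D p U i = W i)]).
Proof.
move=> _ pp m0 _.
split; first split.
- exact: t4 pp m0.
- exact: t5 pp m0.
- move=> _; split.
  + exact: t1 pp.
  + exact: t2 pp.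
  + exact: t3 pp m0.
Qed.
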